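(* Let $0<q<1$. Define the $q$-Bernoulli numbers $b_{n,q}$ and $q$-Bernoulli polynomials $B_{n,q}(x)$ by \[ \frac{t}{e_q(t)-1}=\sum_{n=0}^\infty b_{n,q}\frac{t^n}{[n]_q!},\qquad \frac{t}{e_q(t)-1}e_q(tx)=\sum_{n=0}^\infty B_{n,q}(x)\frac{t^n}{[n]_q!}. \] Then for every positive integer $n$, $B_{n,q}(x)$ satisfies the $q$-difference equation \[ \sum_{k=2}^{n}\frac{q^{n-k-1}b_{k,q}}{[k]_q!}D_{q,x}^{k}B_{n,q}(x)-q^n\left(x-\frac{1}{q[2]_q}\right)D_{q,x}B_{n,q}(x)+[n]_qB_{n,q}(qx)=0, \] i.e. \[ \frac{b_{n,q}}{q[n]_q!}D_{q,x}^nB_{n,q}(x)+\frac{b_{n-1,q}}{[n-1]_q!}D_{q,x}^{n-1}B_{n,q}(x)+\dots+q^{n-3}\frac{b_{2,q}}{[2]_q!}D_{q,x}^2B_{n,q}(x)-q^n\left(x-\frac{1}{q[2]_q}\right)D_{q,x}B_{n,q}(x)+[n]_qB_{n,q}(qx)=0. \]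
   Context: $[n]_q=\frac{1-q^n}{1-q}$, $[0]_q!=1$, $[n]_q!=[n]_q\cdots[1]_q$, $e_q(t)=\sum_{n\ge0}\frac{t^n}{[n]_q!}$. The $q$-derivative is $D_{q,x}f(x)=\frac{f(qx)-f(x)}{(q-1)x}$ (on polynomials $D_{q,x}x^n=[n]_qx^{n-1}$), and $D_{q,x}^k$ is its $k$-fold iterate. *)

(* Defs.v *)
From HB Require Import structures.
From mathcomp Require Import all_boot all_order all_algebra.
Set Implicit Arguments. Unset Strict Implicit. Unset Printing Implicit Defensive.
Import Order.TTheory GRing.Theory Num.Theory.
Local Open Scope ring_scope.

Section QDefs.
Variable R : realFieldType.
Variable q : R.

Definition qnat (n : nat) : R := (1 - q ^+ n) / (1 - q).

Definition qfact (n : nat) : R := \prod_(i < n) qnat i.+1.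

(* n-th coefficient of the formal power series e_q(t) - 1 *)
Definition eqm1_coef (n : nat) : R := if n == 0%N then 0 else 1 / qfact n.

(* b is the coefficient sequence of t/(e_q(t)-1) = sum_n b_n t^n/[n]_q!,
   as a formal power series: (e_q(t) - 1) * sum_n b_n t^n/[n]_q! = t. *)
Definition is_qBernoulli_numbers (b : nat -> R) : Prop :=
  forall n : nat,
    \sum_(k < n.+1) (b k / qfact k) * eqm1_coef (n - k) = (n == 1%N)%:R.

(* B_{n,q}(x): coefficient of t^n/[n]_q! in (t/(e_q(t)-1)) e_q(tx), i.e.
   B_{n,q}(x)/[n]_q! = sum_{k<=n} (b_k/[k]_q!) (x^{n-k}/[n-k]_q!). *)
Definition qBpoly (b : nat -> R) (n : nat) : {poly R} :=
  qfact n *: \sum_(k < n.+1) ((b k / (qfact k * qfact (n - k))) *: 'X^(n - k)).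

Definition Dq (p : {poly R}) : {poly R} :=
  \poly_(i < (size p).-1) (qnat i.+1 * p`_i.+1).

Definition Dqn (k : nat) (p : {poly R}) : {poly R} := iter k Dq p.

End QDefs.

(* Main.v *)
Require Import Defs.
From HB Require Import structures.
From mathcomp Require Import all_boot all_order all_algebra.
From mathcomp Require Import ring zify.
Import Order.TTheory GRing.Theory Num.Theory.
Local Open Scope ring_scope.
Set Implicit Arguments. Unset Strict Implicit. Unset Printing Implicit Defensive.

Definition lowz (R : realFieldType) (N : nat) (p : {poly R}) :=
  forall i, (i < N)%N -> p`_i = 0.

Lemma lowzD (R : realFieldType) (N : nat) (p r : {poly R}) :
  lowz N p -> lowz N r -> lowz N (p + r).
Proof. by move=> hp hr i hi; rewrite coefD hp // hr // addr0. Qed.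

Lemma lowzN (R : realFieldType) (N : nat) (p : {poly R}) : lowz N p -> lowz N (- p).
Proof. by move=> hp i hi; rewrite coefN hp // oppr0. Qed.

Lemma lowzMl (R : realFieldType) (N : nat) (p r : {poly R}) : lowz N p -> lowz N (r * p).
Proof.
move=> hp i hi; rewrite coefMr big1 // => j _; rewrite hp ?mulr0 //.
exact: leq_ltn_trans (ltnSE (ltn_ord j)) hi.
Qed.

Lemma lowzMr (R : realFieldType) (N : nat) (p r : {poly R}) : lowz N p -> lowz N (p * r).
Proof. by move=> hp; rewrite mulrC; apply: lowzMl. Qed.

Lemma coef_sig (R : realFieldType) (c : R) (p : {poly R}) n :
  (p \Po (c *: 'X))`_n = c ^+ n * p`_n.
Proof.
rewrite coef_comp_poly.
rewrite (eq_bigr (fun i : 'I_(size p) => if (i : nat) == n then c ^+ n * p`_n else 0)); last first.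
  move=> i _; rewrite exprZn coefZ coefXn eq_sym.
  by case: eqP => [->|_]; [rewrite mulr1 mulrC | rewrite !mulr0].
rewrite -big_mkcond /= (big_ord1_eq _ (fun=> c ^+ n * p`_n) n (size p)).
by case: ltnP => // hn; rewrite nth_default ?mulr0.
Qed.

Lemma lowz_sig (R : realFieldType) (c : R) (N : nat) (p : {poly R}) :
  lowz N p -> lowz N (p \Po (c *: 'X)).
Proof. by move=> hp i hi; rewrite coef_sig hp // mulr0. Qed.

Lemma qnat_gt0 (R : realFieldType) (q : R) k : 0 < q -> q < 1 -> (0 < k)%N -> 0 < qnat q k.
Proof.
move=> h0 h1 hk; rewrite /qnat divr_gt0 // subr_gt0 ?exprn_ilt1 ?ltW //.
by rewrite -lt0n.
Qed.

Lemma qfact_gt0 (R : realFieldType) (q : R) k : 0 < q -> q < 1 -> 0 < qfact q k.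
Proof.
move=> h0 h1; elim: k => [|k IH]; first by rewrite /qfact big_ord0 ltr01.
by rewrite /qfact big_ord_recr /= mulr_gt0 // qnat_gt0.
Qed.

Lemma qfactS (R : realFieldType) (q : R) k : qfact q k.+1 = qfact q k * qnat q k.+1.
Proof. by rewrite /qfact big_ord_recr. Qed.

Definition bet (R : realFieldType) (q : R) (b : nat -> R) k := b k / qfact q k.

Lemma Fone (R : realFieldType) (q : R) (b : nat -> R) (N : nat) :
  is_qBernoulli_numbers q b ->
  lowz N (\poly_(i < N) bet q b i * \poly_(i < N) eqm1_coef q i - 'X).
Proof.
move=> hb i hi; rewrite coefB coefM coefX -(hb i); apply/eqP; rewrite subr_eq0; apply/eqP.
apply: eq_bigr => j _; rewrite !coef_poly.
have hj : (j < N)%N by exact: leq_ltn_trans (ltnSE (ltn_ord j)) hi.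
have hij : (i - j < N)%N by exact: leq_ltn_trans (leq_subr _ _) hi.
by rewrite hj hij /bet.
Qed.

Lemma Ftwo (R : realFieldType) (q : R) (N : nat) : 0 < q -> q < 1 ->
  lowz N (\poly_(i < N) eqm1_coef q i \Po (q *: 'X) - \poly_(i < N) eqm1_coef q i
     - (q%:P - 1) * ('X * (\poly_(i < N) eqm1_coef q i + 1))).
Proof.
move=> h0 h1 i hi; rewrite !coefB coef_sig mulrBl mul1r coefB coefCM coefXM.
have q1 : 1 - q != 0 by rewrite subr_eq0 eq_sym lt_eqF.
case: i hi => [|[|m]] hi /=.
- by rewrite coef_poly hi /eqm1_coef /= !mulr0 !subr0.
- rewrite coefD coef1 /= !coef_poly hi ltnW // /eqm1_coef /=.
  rewrite /qfact big_ord1 /qnat expr1 divff // !divr1; ring.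
- rewrite coefD coef1 /= !coef_poly hi ltnW // /eqm1_coef /= qfactS /qnat.
  have f0 := qfact_gt0 m.+1 h0 h1.
  have q2 : 1 - q ^+ m.+2 != 0 by rewrite subr_eq0 eq_sym lt_eqF // exprn_ilt1 // ltW.
  field; rewrite q1 q2 gt_eqF //.
Qed.

Definition TB (R : realFieldType) (q : R) b N : {poly R} := \poly_(i < N) bet q b i.
Definition TG (R : realFieldType) (q : R) N : {poly R} := \poly_(i < N) eqm1_coef q i.
Definition sig (R : realFieldType) (q : R) (p : {poly R}) := p \Po (q *: 'X).
Definition Ypol (R : realFieldType) (q : R) b N : {poly R} :=
  (q%:P - 1) * ((TB q b N - 1 + 'X) * sig q (TB q b N)) + q%:P * (sig q (TB q b N) - TB q b N).

Lemma YGG (R : realFieldType) (q : R) b (N : nat) : 0 < q -> q < 1 ->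
  is_qBernoulli_numbers q b ->
  lowz N (Ypol q b N * (TG q N * sig q (TG q N))).
Proof.
move=> h0 h1 hb.
set B := TB q b N. set G := TG q N. set Q := q%:P.
set R1 := B * G - 'X. set R2 := sig q B * sig q G - Q * 'X.
set R3 := sig q G - G - (Q - 1) * ('X * (G + 1)).
have r1 : lowz N R1 by exact: (@Fone R q b N hb).
have r3 : lowz N R3 by exact: (@Ftwo R q N h0 h1).
have r2 : lowz N R2.
  by move: (lowz_sig q r1); rewrite /R1 /R2 /sig comp_polyB comp_polyM comp_polyX mul_polyC.
have -> : Ypol q b N * (G * sig q G) =
  (Q - 1) * (R1 * (Q * 'X + R2) + ('X - G + 'X * G) * R2) + Q * R2 * G
   - Q * R1 * sig q G - Q * 'X * R3.
  rewrite /Ypol /R1 /R2 /R3 -/B -/Q; ring.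
apply: lowzD; last by apply: lowzN; apply: lowzMl.
apply: lowzD; last by apply: lowzN; apply: lowzMr; apply: lowzMl.
apply: lowzD; last by apply: lowzMr; apply: lowzMl.
apply: lowzMl; apply: lowzD; [exact: lowzMr | exact: lowzMl].
Qed.

Lemma Ucoef (R : realFieldType) (q : R) (N : nat) : 0 < q -> q < 1 -> (2 < N)%N ->
  [/\ (TG q N * sig q (TG q N))`_0 = 0, (TG q N * sig q (TG q N))`_1 = 0
    & (TG q N * sig q (TG q N))`_2 = q].
Proof.
move=> h0 h1 hN.
have g0 : (TG q N)`_0 = 0 by rewrite coef_poly (ltn_trans _ hN) // /eqm1_coef.
have g1 : (TG q N)`_1 = 1.
  by rewrite coef_poly (ltn_trans _ hN) // /eqm1_coef /= /qfact big_ord1 /qnat expr1 divff ?divr1 // subr_eq0 eq_sym lt_eqF.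
split; rewrite coefM ?big_ord_recr big_ord0 /= /sig ?coef_sig ?g0 ?g1; ring.
Qed.

Lemma Yzero (R : realFieldType) (q : R) b (N : nat) : 0 < q -> q < 1 ->
  is_qBernoulli_numbers q b -> forall s, (s.+2 < N)%N -> (Ypol q b N)`_s = 0.
Proof.
move=> h0 h1 hb; elim/ltn_ind => s IH hs.
have hN : (2 < N)%N by clear -hs; lia.
have [u0 u1 u2] := Ucoef h0 h1 hN.
have := @YGG R q b N h0 h1 hb s.+2 hs.
rewrite coefM !big_ord_recr /= !subnn u0 mulr0 addr0.
have -> : (s.+2 - s.+1 = 1)%N by clear; lia.
have -> : (s.+2 - s = 2)%N by clear; lia.
rewrite u1 u2 mulr0 addr0 big1 ?add0r.
  by move/eqP; rewrite mulf_eq0 (gt_eqF h0) orbF => /eqP.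
move=> j _; have hj := ltn_ord j; rewrite IH ?mul0r //; clear -hs hj; lia.
Qed.

Lemma qfact1 (R : realFieldType) (q : R) : q < 1 -> qfact q 1 = 1.
Proof.
move=> h1; rewrite /qfact big_ord1 /qnat expr1 divff // subr_eq0 eq_sym lt_eqF //.
Qed.

Lemma qfact2 (R : realFieldType) (q : R) : q < 1 -> qfact q 2 = 1 + q.
Proof.
move=> h1; rewrite qfactS qfact1 // mul1r /qnat expr2.
have q1 : 1 - q != 0 by rewrite subr_eq0 eq_sym lt_eqF.
by field.
Qed.

Lemma bet0 (R : realFieldType) (q : R) b : q < 1 -> is_qBernoulli_numbers q b -> bet q b 0 = 1.
Proof.
move=> h1 hb; have := hb 1%N; rewrite !big_ord_recl big_ord0 /= /eqm1_coef /= qfact1 //.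
by rewrite ?mulr0 ?addr0 ?divr1 ?mulr1 /bet.
Qed.

Lemma bet1 (R : realFieldType) (q : R) b : 0 < q -> q < 1 -> is_qBernoulli_numbers q b ->
  bet q b 1 = - 1 / (1 + q).
Proof.
move=> h0 h1 hb; have := hb 2%N; rewrite !big_ord_recl big_ord0 /= /eqm1_coef /= qfact1 // qfact2 //.
rewrite ?mulr0 ?addr0 ?divr1 ?mulr1.
have e0 := bet0 h1 hb; rewrite /bet in e0; rewrite e0 => h.
have q1 : 1 + q != 0 by rewrite gt_eqF // addr_gt0.
rewrite /bet qfact1 // divr1.
have -> : b 1%N = (1 * (1 / (1 + q)) + b (bump 0 0)) - 1 * (1/(1+q)) by rewrite addrC addKr.
by rewrite h; field.
Qed.

Lemma core (R : realFieldType) (q : R) b : 0 < q -> q < 1 -> is_qBernoulli_numbers q b ->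
  forall s', \sum_(2 <= k < s'.+2) q ^+ (s'.+1 - k) * bet q b k * bet q b (s'.+1 - k)
  = - q * qnat q s'.+1 * bet q b s'.+1 - q ^+ s' * bet q b s' * q / (1 + q).
Proof.
move=> h0 h1 hb s'.
have := @Yzero R q b s'.+4 h0 h1 hb s'.+1 (ltnSn _).
rewrite /Ypol coefD mulrBl mul1r !coefD !coefN !coefCM coefD coefN coefM /sig coef_sig.
rewrite (eq_bigr (fun j : 'I_(s'.+2) => (bet q b j - ((j : nat) == 0%N)%:R + ((j : nat) == 1%N)%:R) * (q ^+ (s'.+1 - j) * bet q b (s'.+1 - j)))); last first.
  move=> j _; have hj := ltn_ord j.
  rewrite coef_sig !coefD coefN coef1 coefX /TB !coef_poly.
  have -> : (j < s'.+4)%N by clear -hj; lia.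
  by have -> : (s'.+1 - j < s'.+4)%N by clear; lia.
set F := (fun i : nat => (bet q b i - (i == 0%N)%:R + (i == 1%N)%:R) * (q ^+ (s'.+1 - i) * bet q b (s'.+1 - i))).
rewrite -(big_mkord xpredT F) big_ltn // big_ltn //.
rewrite (eq_big_nat _ _ (F2 := fun k => q ^+ (s'.+1 - k) * bet q b k * bet q b (s'.+1 - k))); last first.
  move=> k /andP[hk _]; rewrite /F.
  have -> : (k == 0%N) = false by clear -hk; lia.
  have -> : (k == 1%N) = false by clear -hk; lia.
  by rewrite subr0 addr0 mulrCA mulrA.
rewrite /F /= /TB coef_poly /= bet0 // bet1 // subn1 /=.
set S := \sum_(2 <= k < s'.+2) _.
move=> h.
have q1 : q - 1 != 0 by rewrite subr_eq0 lt_eqF.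
have q2 : 1 - q != 0 by rewrite subr_eq0 eq_sym lt_eqF.
have q3 : 1 + q != 0 by rewrite gt_eqF // addr_gt0.
apply/eqP; rewrite -subr_eq0; apply/eqP.
have e : (s'.+1 < s'.+4)%N by clear; lia.
rewrite e in h.
rewrite -(mulr0 ((q - 1)^-1)) -h /qnat.
by field; rewrite q1 q2 q3.
Qed.

Lemma coefDq (R : realFieldType) (q : R) (p : {poly R}) i :
  (Dq q p)`_i = qnat q i.+1 * p`_i.+1.
Proof.
rewrite /Dq coef_poly; case: ltnP => // h.
rewrite nth_default ?mulr0 //; move: h; case: (size p) => //= m; by [].
Qed.

Lemma coefP (R : realFieldType) (q : R) b n i :
  (qBpoly q b n)`_i =
  if (i < n.+1)%N then qfact q n * (b (n - i)%N / (qfact q (n - i)%N * qfact q i)) else 0.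
Proof.
rewrite /qBpoly coefZ coef_sum.
case: ltnP => hi.
- rewrite (eq_bigr (fun k : 'I_n.+1 => if (k : nat) == (n - i)%N then
     b (n - i)%N / (qfact q (n - i)%N * qfact q i) else 0)); last first.
    move=> k _; rewrite coefZ coefXn; have hk := ltn_ord k.
    have -> : (i == (n - k))%N = ((k:nat) == (n - i))%N.
      by apply/idP/idP => /eqP h; apply/eqP; clear -h hk hi; lia.
    case: eqP => [->|_]; last by rewrite mulr0.
    by rewrite mulr1 (_ : (n - (n - i) = i)%N) //; clear -hi; lia.
  rewrite -big_mkcond /= (big_ord1_eq _ (fun=> b (n - i)%N / (qfact q (n - i)%N * qfact q i)) (n - i) n.+1).
  by rewrite (_ : (n - i < n.+1)%N) //; clear; lia.
- rewrite big1 ?mulr0 // => k _; rewrite coefZ coefXn.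
  have hk := ltn_ord k.
  have -> : (i == n - k)%N = false by apply/eqP; clear -hk hi; lia.
  by rewrite mulr0.
Qed.

Lemma coefDqn (R : realFieldType) (q : R) b n k i : 0 < q -> q < 1 ->
  (Dqn q k (qBpoly q b n))`_i =
  if (i + k < n.+1)%N then qfact q n * (b (n - (i + k))%N / (qfact q (n - (i + k))%N * qfact q i)) else 0.
Proof.
move=> h0 h1; elim: k i => [|k IH] i.
  by rewrite /Dqn /= coefP addn0.
rewrite /Dqn iterS -/(Dqn q k _) coefDq IH addSnnS.
case: ifP => _; last by rewrite mulr0.
have f1 := qfact_gt0 i h0 h1. have f2 := qfact_gt0 (n - (i + k.+1))%N h0 h1.
have f3 := @qnat_gt0 R q i.+1 h0 h1 (ltn0Sn i).
rewrite qfactS; field.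
by rewrite !gt_eqF.
Qed.

Lemma coefXDq (R : realFieldType) (q : R) (p : {poly R}) i :
  ('X * Dq q p)`_i = qnat q i * p`_i.
Proof.
rewrite coefXM; case: i => [|i] /=; last by rewrite coefDq.
by rewrite /qnat expr0 subrr !mul0r.
Qed.
Unset Implicit Arguments. Set Strict Implicit.

Lemma zexp (R : realFieldType) (q : R) (m k : nat) : q != 0 -> (k <= m)%N ->
  q ^ (m%:Z - k%:Z - 1) = q ^+ (m - k) / q.
Proof.
move=> hq hk; rewrite subzn // expfzDr // exprN1 //.
Qed.

Theorem theorem4 (R : realFieldType) (q : R) (hq0 : 0 < q) (hq1 : q < 1)
  (b : nat -> R) (hb : is_qBernoulli_numbers q b)
  (n : nat) (hn : (0 < n)%N) (x : R) :
  \sum_(2 <= k < n.+1)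
      (q ^ (n%:Z - k%:Z - 1) * b k / qfact q k) * (Dqn q k (qBpoly q b n)).[x]
  - q ^+ n * (x - 1 / (q * qnat q 2)) * (Dq q (qBpoly q b n)).[x]
  + qnat q n * (qBpoly q b n).[q * x] = 0.
Proof.
set P := qBpoly q b n.
have hP : P = qBpoly q b n := erefl. clearbody P.
set Z := \sum_(2 <= k < n.+1) (q ^ (n%:Z - k%:Z - 1) * b k / qfact q k) *: Dqn q k P
  - (q ^+ n)%:P * (('X - (1 / (q * qnat q 2))%:P) * Dq q P)
  + (qnat q n)%:P * (P \Po (q *: 'X)).
have -> : \sum_(2 <= k < n.+1)
      (q ^ (n%:Z - k%:Z - 1) * b k / qfact q k) * (Dqn q k P).[x]
  - q ^+ n * (x - 1 / (q * qnat q 2)) * (Dq q P).[x]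
  + qnat q n * P.[q * x] = Z.[x].
  rewrite /Z !hornerD hornerN horner_sum !hornerCM hornerM hornerXsubC horner_comp !hornerZ hornerX.
  congr (_ - _ + _).
  by apply: eq_bigr => k _; rewrite hornerZ.
  exact: esym (mulrA _ _ _).
suff -> : Z = 0 by rewrite horner0.
apply/polyP => i; rewrite coef0 /Z.
rewrite !coefD !coefN coef_sum !coefCM mulrBl coefD coefN coefCM coefXDq coef_sig coefDq.
rewrite hP !coefP.
rewrite (eq_bigr (fun k => q ^ (n%:Z - k%:Z - 1) * b k / qfact q k *
   (if (i + k < n.+1)%N then qfact q n * (b (n - (i + k))%N / (qfact q (n - (i + k))%N * qfact q i)) else 0))); last first.
  by move=> k _; rewrite coefZ coefDqn.
have hq : q != 0 by rewrite gt_eqF.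
case: (ltnP n i) => hin.
  rewrite big1; last first.
    move=> k _; rewrite (_ : (i + k < n.+1)%N = false) ?mulr0 //; clear -hin; lia.
  rewrite (_ : (i < n.+1)%N = false); last by clear -hin; lia.
  rewrite (_ : (i.+1 < n.+1)%N = false); last by clear -hin; lia.
  ring.
have [s hs] : exists s, n = (i + s)%N by exists (n - i)%N; rewrite subnKC.
subst n.
clear hn Z hP P; case: s hin => [|s'] hin.
  rewrite (eq_big_nat _ _ (F2 := fun _ => 0)) ?big1 //; last first.
    move=> k /andP[hk _]; rewrite (_ : (i + k < (i + 0).+1)%N = false) ?mulr0 //; clear -hk; lia.
  rewrite (_ : (i < (i + 0).+1)%N = true); last by clear; lia.
  rewrite (_ : (i.+1 < (i + 0).+1)%N = false); last by clear; lia.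
  rewrite !addn0; ring.
set n := (i + s'.+1)%N.
rewrite (_ : (i < n.+1)%N = true); last by rewrite /n; clear; lia.
rewrite (_ : (i.+1 < n.+1)%N = true); last by rewrite /n; clear; lia.
rewrite (_ : (n - i = s'.+1)%N); last by rewrite /n; clear; lia.
rewrite (_ : (n - i.+1 = s')%N); last by rewrite /n; clear; lia.
rewrite (big_cat_nat _ (n := s'.+2)) //=; last by rewrite /n; clear; lia.
rewrite [X in _ + X - _ + _](eq_big_nat _ _ (F2 := fun _ => 0)) ?big1_eq ?addr0 //; last first.
  move=> k /andP[hk _]; rewrite (_ : (i + k < n.+1)%N = false) ?mulr0 //.
  by rewrite /n; clear -hk; lia.
rewrite (eq_big_nat _ _ (F2 := fun k => (q ^+ i / q * qfact q n / qfact q i) *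
   (q ^+ (s'.+1 - k) * bet q b k * bet q b (s'.+1 - k)))); last first.
  move=> k /andP[hk1 hk2].
  rewrite (_ : (i + k < n.+1)%N = true); last by rewrite /n; clear -hk2; lia.
  rewrite (_ : (n - (i + k) = s'.+1 - k)%N); last by rewrite /n; clear -hk2; lia.
  rewrite zexp //; last by rewrite /n; clear -hk2; lia.
  rewrite (_ : (n - k = i + (s'.+1 - k))%N); last by rewrite /n; clear -hk2; lia.
  rewrite exprD /bet.
  have f1 := qfact_gt0 k hq0 hq1. have f2 := qfact_gt0 (s'.+1 - k)%N hq0 hq1.
  have f3 := qfact_gt0 i hq0 hq1.
  by field; rewrite hq !gt_eqF.
rewrite -big_distrr /= core //.
rewrite (qfactS q i) /bet.
have f1 := qfact_gt0 i hq0 hq1. have f2 := qfact_gt0 s' hq0 hq1.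
have f3 := qfact_gt0 s'.+1 hq0 hq1. have f4 := qfact_gt0 n hq0 hq1.
have f5 := @qnat_gt0 R q i.+1 hq0 hq1 (ltn0Sn i).
set F := qfact q n. set t := qnat q i.+1.
rewrite /n /qnat exprD !exprS expr0.
have q1 : 1 - q != 0 by rewrite subr_eq0 eq_sym lt_eqF.
have q3 : 1 + q != 0 by rewrite gt_eqF // addr_gt0.
have q4 : 1 - q * q != 0.
  by rewrite -expr2 subr_eq0 eq_sym lt_eqF // exprn_ilt1 // ltW.
by field; rewrite q1 q3 q4 hq !gt_eqF.
Qed.
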